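(* For all integers $n\ge0$ and odd $k\ge3$, $$\delta_kH^{\mathfrak a}(1^n)=-\sum_{i=\max(1,k-n)}^{k-1}\frac1k\binom ki\,T^i\,H^{\mathfrak a}(1^{n-k+i}).$$
   Context: $\mathcal M^{(1)}=\mathbb Q[\zeta^{\mathfrak a}(3),\zeta^{\mathfrak a}(5),\dots]$ is the free polynomial subalgebra of depth-one motivic MZVs in $\mathcal A=\mathcal H/\zeta^{\mathfrak m}(2)\mathcal H$; $\zeta^{\mathfrak a}(k)=0$ for even $k$. For odd $k\ge3$, $\delta_k$ is the continuous $\mathbb Q((T))$-linear derivation $\partial/\partial\zeta^{\mathfrak a}(k)$ of $\mathcal M^{(1)}((T))$. Motivic power sums: $H^{\mathfrak a}(n)=(-1)^n\sum_{j\ge1}\binom{n+j-1}{n-1}\zeta^{\mathfrak a}(n+j)T^j$. Motivic elementary symmetric sums: $H^{\mathfrak a}(1^0)=1$, $H^{\mathfrak a}(1^n)=\frac1n\sum_{i=1}^n(-1)^{i-1}H^{\mathfrak a}(i)H^{\mathfrak a}(1^{n-i})$ for $n\ge1$. *)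

(* Defs.v *)
From HB Require Import structures.
From mathcomp Require Import all_boot all_order all_algebra.
Set Implicit Arguments. Unset Strict Implicit. Unset Printing Implicit Defensive.
Import Order.TTheory GRing.Theory Num.Theory.
Local Open Scope ring_scope.

(* Formal power series in T with coefficients in A, as coefficient functions:
   f represents sum_m f m T^m. *)
Definition ps (A : Type) := nat -> A.

Section PS.
Variable A : comAlgType rat.

Definition ps0 : ps A := fun _ => 0.
Definition ps1 : ps A := fun m => if m == 0%N then 1 else 0.
Definition psmul (f g : ps A) : ps A :=
  fun m => \sum_(i < m.+1) f i * g (m - i)%N.
Definition psTpow (i : nat) (f : ps A) : ps A :=
  fun m => if (i <= m)%N then f (m - i)%N else 0.
Definition psmap (D : A -> A) (f : ps A) : ps A := fun m => D (f m).

Definition zeta_a (z : nat -> A) (m : nat) : A :=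
  if odd m && (3 <= m)%N then z m else 0.

Definition Hpow (z : nat -> A) (n : nat) : ps A :=
  fun j => if j == 0%N then 0
           else (((-1) ^+ n * ('C(n + j - 1, n - 1))%:R : rat) *: zeta_a z (n + j)%N).

(* [:: H^a(1^0); ... ; H^a(1^n)] *)
Fixpoint Helems (z : nat -> A) (n : nat) : seq (ps A) :=
  match n with
  | 0 => [:: ps1]
  | n'.+1 =>
      let s := Helems z n' in
      rcons s (fun m => ((n'.+1)%:R^-1 : rat) *:
        \sum_(1 <= i < n'.+2)
           (((-1) ^+ i.-1 : rat) *: psmul (Hpow z i) (nth ps0 s (n'.+1 - i)%N) m))
  end.

Definition Helem (z : nat -> A) (n : nat) : ps A := nth ps0 (Helems z n) n.

Definition is_derivation (D : A -> A) : Prop :=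
  (forall x y, D (x + y) = D x + D y) /\
  (forall (c : rat) x, D (c *: x) = c *: D x) /\
  (forall x y, D (x * y) = D x * y + x * D y).
End PS.

(* Main.v *)
Require Import Defs.
From HB Require Import structures.
From mathcomp Require Import all_boot all_order all_algebra.
From mathcomp Require Import boolp zify ring.
Import Order.TTheory GRing.Theory Num.Theory.
Local Open Scope ring_scope.

Section Ring.
Variable A : comAlgType rat.
Definition psadd (f g : ps A) : ps A := fun m => f m + g m.
Definition psopp (f : ps A) : ps A := fun m => - f m.
HB.instance Definition _ := gen_eqMixin (ps A).
HB.instance Definition _ := gen_choiceMixin (ps A).
Lemma psaddA : associative psadd.
Proof. by move=> f g h; apply: funext => m; rewrite /psadd addrA. Qed.
Lemma psaddC : commutative psadd.
Proof. by move=> f g; apply: funext => m; rewrite /psadd addrC. Qed.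
Lemma psadd0 : left_id (ps0 A) psadd.
Proof. by move=> f; apply: funext => m; rewrite /psadd /ps0 add0r. Qed.
Lemma psaddN : left_inverse (ps0 A) psopp psadd.
Proof. by move=> f; apply: funext => m; rewrite /psadd /psopp /ps0 addNr. Qed.
HB.instance Definition _ := GRing.isZmodule.Build (ps A) psaddA psaddC psadd0 psaddN.

Lemma psmulE (f g : ps A) m :
  psmul f g m = \sum_(0 <= i < m.+1) f i * g (m - i)%N.
Proof. by rewrite big_mkord. Qed.

Lemma tri (F : nat -> nat -> A) m :
  \sum_(0 <= i < m.+1) \sum_(0 <= j < i.+1) F j (i - j)%N =
  \sum_(0 <= j < m.+1) \sum_(0 <= l < (m - j).+1) F j l.
Proof.
elim: m => [|m IH]; first by rewrite !big_nat1.
rewrite big_nat_recr //= IH.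
rewrite [Tx in _ + Tx]big_nat_recr //= subnn.
rewrite [RHS]big_nat_recr //= subnn big_nat1 addrA; congr (_ + _).
rewrite -big_split /=; apply: eq_big_nat => j /andP [_ Hj].
rewrite subSn; last by rewrite -ltnS.
by rewrite [RHS]big_nat_recr.
Qed.

Lemma psmulA : associative (@psmul A).
Proof.
move=> f g h; apply: funext => m; rewrite !psmulE.
transitivity (\sum_(0 <= j < m.+1) \sum_(0 <= l < (m - j).+1)
   (fun j l => f j * g l * h (m - j - l)%N) j l).
  apply: eq_big_nat => j /andP [_ Hj]; rewrite psmulE mulr_sumr.
  by apply: eq_big_nat => l _; rewrite /= mulrA.
rewrite -tri; apply: eq_big_nat => i /andP [_ Hi].
rewrite psmulE mulr_suml; apply: eq_big_nat => j /andP [_ Hj]; rewrite /=.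
congr (_ * _ * h _); lia.
Qed.

Lemma psmulC : commutative (@psmul A).
Proof.
move=> f g; apply: funext => m; rewrite /psmul.
rewrite (reindex_inj rev_ord_inj) /=; apply: eq_bigr => i _.
rewrite mulrC subKn //; exact: leq_ord.
Qed.

Lemma psmul1 : left_id (ps1 A) (@psmul A).
Proof.
move=> f; apply: funext => m; rewrite psmulE big_nat_recl //= /ps1 /= mul1r subn0.
by rewrite big1 ?addr0 // => i _; rewrite mul0r.
Qed.

Lemma psmulDl : left_distributive (@psmul A) +%R.
Proof.
move=> f g h; apply: funext => m.
transitivity (psmul f h m + psmul g h m); last by [].
rewrite /psmul -big_split /=.
by apply: eq_bigr => i _; rewrite mulrDl.
Qed.

HB.instance Definition _ := GRing.Zmodule_isComPzRing.Build (ps A)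
  psmulA psmulC psmul1 psmulDl.

Definition psscale (c : rat) (f : ps A) : ps A := fun m => c *: f m.
Lemma psscaleA a b v : psscale a (psscale b v) = psscale (a * b) v.
Proof. by apply: funext => m; rewrite /psscale scalerA. Qed.
Lemma psscale1 : left_id 1 psscale.
Proof. by move=> v; apply: funext => m; rewrite /psscale scale1r. Qed.
Lemma psscaleDr : right_distributive psscale +%R.
Proof. by move=> a u v; apply: funext => m; rewrite /psscale /= /psadd scalerDr. Qed.
Lemma psscaleDl v : {morph psscale^~ v: a b / a + b}.
Proof. by move=> a b; apply: funext => m; rewrite /psscale /= /psadd scalerDl. Qed.
HB.instance Definition _ := GRing.Zmodule_isLmodule.Build rat (ps A)
  psscaleA psscale1 psscaleDr psscaleDl.

Lemma pscD (f g : ps A) m : (f + g) m = f m + g m. Proof. by []. Qed.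
Lemma pscN (f : ps A) m : (- f) m = - f m. Proof. by []. Qed.
Lemma psc0 m : (0 : ps A) m = 0. Proof. by []. Qed.
Lemma pscM (f g : ps A) m : (f * g) m = \sum_(i < m.+1) f i * g (m - i)%N.
Proof. by []. Qed.
Lemma pscZ c (f : ps A) m : (c *: f) m = c *: f m. Proof. by []. Qed.
Lemma psc1 m : (1 : ps A) m = if m == 0%N then 1 else 0. Proof. by []. Qed.
Lemma psc_sum I (r : seq I) (P : pred I) (F : I -> ps A) m :
  (\sum_(i <- r | P i) F i) m = \sum_(i <- r | P i) F i m.
Proof. by elim/big_rec2: _ => // i y1 y2 _ <-. Qed.

Lemma scalerAl_ps c (f g : ps A) : c *: (f * g) = (c *: f) * g.
Proof.
apply: funext => m; rewrite pscZ !pscM scaler_sumr; apply: eq_bigr => i _.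
by rewrite pscZ scalerAl.
Qed.
Lemma scalerAr_ps c (f g : ps A) : c *: (f * g) = f * (c *: g).
Proof. by rewrite mulrC scalerAl_ps mulrC. Qed.

Definition Tx : ps A := fun m => if m == 1%N then 1 else 0.
Lemma pscXM (f : ps A) m : (Tx * f) m = if (1 <= m)%N then f (m - 1)%N else 0.
Proof.
rewrite pscM -(big_mkord xpredT (fun i => Tx i * f (m - i)%N)).
case: m => [|m]; first by rewrite big_nat1 /Tx /= mul0r.
rewrite big_nat_recl // big_nat_recl // /Tx /= mul0r mul1r add0r big1 ?addr0.
  by rewrite subn1.
by move=> i _; rewrite mul0r.
Qed.
Lemma pscXnM i (f : ps A) m :
  (Tx ^+ i * f) m = if (i <= m)%N then f (m - i)%N else 0.
Proof.
elim: i m => [|i IH] m; first by rewrite expr0 mul1r subn0.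
rewrite exprS -mulrA pscXM; case: m => [|m] //=.
by rewrite subn1 /= IH.
Qed.
Lemma psTpowE i (f : ps A) : psTpow i f = Tx ^+ i * f.
Proof. by apply: funext => m; rewrite pscXnM. Qed.
End Ring.

Definition sg (i : nat) : rat := (-1) ^+ i.-1.

Lemma coefA (k i : nat) : (1 <= i)%N -> (0 < k)%N ->
  sg i * ((-1) ^+ i * ('C(k.-1, i.-1))%:R) = - (i%:R * (k%:R^-1 * ('C(k, i))%:R)) :> rat.
Proof.
case: i => // i _ Hk; rewrite /sg /= exprS.
have Hb : (k%:R * ('C(k.-1, i))%:R : rat) = i.+1%:R * ('C(k, i.+1))%:R.
  by rewrite -!natrM mul_bin_diag.
have Hs : ((-1) ^+ i * (-1) ^+ i : rat) = 1 by rewrite -exprMn mulrNN mulr1 expr1n.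
have Hk0 : (k%:R : rat) != 0 by rewrite pnatr_eq0 -lt0n.
transitivity (- ((-1) ^+ i * (-1) ^+ i) * (k%:R^-1 * (k%:R * ('C(k.-1, i))%:R)) : rat).
  by rewrite mulrA mulVf // mul1r; ring.
by rewrite Hs Hb; ring.
Qed.


Section Main.
Variable A : comAlgType rat.
Variable z : nat -> A.
Variable D : A -> A.
Variable k : nat.
Hypothesis HD : is_derivation D.
Hypothesis Hz : forall j, odd j -> (3 <= j)%N -> D (z j) = (j == k)%:R.
Hypothesis Hk : odd k.
Hypothesis Hk3 : (3 <= k)%N.
Local Notation Dp := (psmap D).
Local Notation E := (Helem z).
Local Notation T := (Tx A).


Lemma DD x y : D (x + y) = D x + D y. Proof. by case: HD. Qed.
Lemma DZ (c : rat) x : D (c *: x) = c *: D x. Proof. by case: HD => _ []. Qed.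
Lemma DM x y : D (x * y) = D x * y + x * D y. Proof. by case: HD => _ []. Qed.
Lemma D0 : D 0 = 0.
Proof. have H := DD 0 0; rewrite addr0 in H; apply: (addrI (D 0)); by rewrite addr0 -H. Qed.
Lemma D1 : D 1 = 0.
Proof. have H := DM 1 1; rewrite !mulr1 !mul1r in H; apply: (addrI (D 1)); by rewrite addr0 -H. Qed.
Lemma Dsum I (r : seq I) (P : pred I) (F : I -> A) :
  D (\sum_(i <- r | P i) F i) = \sum_(i <- r | P i) D (F i).
Proof. exact: (big_morph D DD D0). Qed.


Lemma DpD (f g : ps A) : Dp (f + g) = Dp f + Dp g.
Proof. by apply: funext => m; exact: DD. Qed.
Lemma Dp0 : Dp 0 = 0.
Proof. by apply: funext => m; exact: D0. Qed.
Lemma DpN (f : ps A) : Dp (- f) = - Dp f.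
Proof. apply: (addrI (Dp f)); by rewrite -DpD !subrr Dp0. Qed.
Lemma Dpsum I (r : seq I) (P : pred I) (F : I -> ps A) :
  Dp (\sum_(i <- r | P i) F i) = \sum_(i <- r | P i) Dp (F i).
Proof. exact: (big_morph Dp DpD Dp0). Qed.
Lemma DpZ c (f : ps A) : Dp (c *: f) = c *: Dp f.
Proof. by apply: funext => m; exact: DZ. Qed.
Lemma DpM (f g : ps A) : Dp (f * g) = Dp f * g + f * Dp g.
Proof.
apply: funext => m; rewrite pscD !pscM; transitivity (D ((f*g) m)); first by [].
rewrite pscM Dsum -big_split /=.
by apply: eq_bigr => i _; rewrite DM.
Qed.
Lemma Dp1 : Dp 1 = 0.
Proof. by apply: funext => m; rewrite /psmap psc1 psc0; case: (m == 0%N); rewrite ?D1 ?D0. Qed.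

Lemma size_Helems n : size (Helems z n) = n.+1.
Proof. by elim: n => [|n IH] //=; rewrite size_rcons IH. Qed.
Lemma nth_Helems n j : (j <= n)%N -> nth (ps0 A) (Helems z n) j = Helem z j.
Proof.
move=> Hj; elim: n Hj => [|n IH] Hj.
  by move: Hj; rewrite leqn0 => /eqP ->.
case: (ltngtP j n.+1) Hj => // [Hlt _ | -> _]; last by [].
by rewrite /= nth_rcons size_Helems Hlt IH.
Qed.
Lemma HelemS n : Helem z n.+1 = (n.+1%:R^-1 : rat) *:
  \sum_(1 <= i < n.+2) (((-1) ^+ i.-1 : rat) *: (Hpow z i * Helem z (n.+1 - i)%N)).
Proof.
apply: funext => m; rewrite /Helem /= nth_rcons size_Helems ltnn eqxx.
rewrite pscZ psc_sum; congr (_ *: _); apply: eq_big_nat => i /andP [Hi _].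
rewrite pscZ nth_Helems //; lia.
Qed.
Lemma Helem0 : Helem z 0 = 1. Proof. by []. Qed.

Lemma Newton n : (n%:R : rat) *: Helem z n =
  \sum_(1 <= i < n.+1) sg i *: (Hpow z i * Helem z (n - i)%N).
Proof.
case: n => [|n]; first by rewrite scale0r big_geq.
rewrite HelemS scalerA mulfV ?scale1r //.
by rewrite pnatr_eq0.
Qed.


Lemma pscXn a m : (Tx A ^+ a) m = if m == a then 1 else 0.
Proof.
rewrite -[Tx A ^+ a]mulr1 pscXnM psc1.
case: (eqVneq m a) => [->|H]; first by rewrite leqnn subnn.
case: ifP => // Ham; rewrite (_ : (m - a == 0)%N = false) //; lia.
Qed.

Lemma Dzeta j : D (zeta_a z j) = (j == k)%:R.
Proof.
rewrite /zeta_a; case: ifP => [/andP [Ho H3]|Hn]; first exact: Hz.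
rewrite D0; case: eqP => // Ejk; move: Hn; by rewrite Ejk Hk Hk3.
Qed.

Lemma DpHpow i : (1 <= i)%N -> Dp (Hpow z i) =
  if (i < k)%N then (((-1) ^+ i * ('C(k.-1, i.-1))%:R : rat) *: Tx A ^+ (k - i)) else 0.
Proof.
move=> Hi; apply: funext => m.
transitivity (D (Hpow z i m)); first by [].
rewrite /Hpow; case: (ifP (i < k)%N) => Hik.
  rewrite pscZ pscXn; case: (eqVneq m 0%N) => [->|Hm0].
    by rewrite D0 (_ : (0 == k - i)%N = false) ?scaler0 //; lia.
  rewrite DZ Dzeta.
  case: (eqVneq (i + m)%N k) => Hs.
    rewrite (_ : (m == k - i)%N = true); last by lia.
    have -> : (i + m - 1 = k.-1)%N by lia.
    by rewrite (_ : (i - 1 = i.-1)%N) //; lia.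
  by rewrite (_ : (m == k - i)%N = false) ?scaler0 //; lia.
rewrite psc0; case: m => [|m] /=; first by rewrite D0.
rewrite DZ Dzeta (_ : (i + m.+1 == k)%N = false) ?scaler0 //; lia.
Qed.



Definition cc (j : nat) : rat := k%:R^-1 * ('C(k, j))%:R.

Lemma claim n : Dp (E n) =
  - \sum_(1 <= j < k | (j <= n)%N) cc j *: (T ^+ (k - j) * E (n - j)%N).
Proof.
elim/ltn_ind: n => n IH.
case: n IH => [|N] IH.
  rewrite Helem0 Dp1 big_nat_cond big1 ?oppr0 //.
  by move=> j /andP [/andP [H1 _] H2]; lia.
set N1 := N.+1.
have HN : (N1%:R : rat) != 0 by rewrite pnatr_eq0.
apply: (scalerI HN).
rewrite -DpZ Newton Dpsum.
under eq_bigr do rewrite DpZ DpM scalerDr.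
rewrite big_split /=.
have TA : \sum_(1 <= i < N1.+1) sg i *: (Dp (Hpow z i) * E (N1 - i)%N) =
   - \sum_(1 <= j < k | (j <= N1)%N) (j%:R * cc j) *: (T ^+ (k - j) * E (N1 - j)%N).
  transitivity (\sum_(1 <= i < N1.+1 | (i < k)%N) - ((i%:R * cc i) *: (T ^+ (k - i) * E (N1 - i)%N))).
    rewrite [RHS]big_mkcond /=; apply: eq_big_nat => i /andP [Hi _].
    rewrite (@DpHpow i Hi); case: ifP => _; last by rewrite mul0r scaler0.
    by rewrite -scalerAl_ps scalerA coefA //; [rewrite scaleNr | lia].
  rewrite sumrN; congr (- _).
  rewrite (big_nat_widen _ _ _ _ _ (_ : N1.+1 <= k + N1)%N); last by lia.
  rewrite [RHS](big_nat_widen _ _ _ _ _ (_ : k <= k + N1)%N); last by lia.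
  by apply: eq_bigl => i; rewrite andbC.
have TB : \sum_(1 <= i < N1.+1) sg i *: (Hpow z i * Dp (E (N1 - i)%N)) =
   - \sum_(1 <= j < k | (j <= N1)%N) (cc j * (N1 - j)%:R) *: (T ^+ (k - j) * E (N1 - j)%N).
  transitivity (- \sum_(1 <= i < N1.+1) \sum_(1 <= j < k | (j <= N1 - i)%N)
      (sg i * cc j) *: (T ^+ (k - j) * (Hpow z i * E (N1 - j - i)%N))).
    rewrite -sumrN; apply: eq_big_nat => i /andP [Hi HiN].
    rewrite IH; last by lia.
    rewrite mulrN scalerN; congr (- _).
    rewrite mulr_sumr scaler_sumr; apply: eq_bigr => j _.
    by rewrite -scalerAr_ps scalerA; congr (_ *: _); rewrite mulrCA subnAC.
  congr (- _).
  rewrite (exchange_big_dep_nat (fun j => j <= N1)%N) /=; last by move=> i j _ _ _ H; lia.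
  rewrite big_nat_cond [RHS]big_nat_cond.
  apply: eq_bigr => j /andP [/andP [Hj1 _] Hj].
  under eq_bigr do rewrite mulrC -scalerA scalerAr_ps.
  rewrite -scaler_sumr -mulr_sumr.
  rewrite (eq_bigl (fun i => true && (i < (N1 - j).+1))%N); last first.
    by move=> i; apply/idP/idP => /=; lia.
  rewrite -big_nat_widen; last by lia.
  by rewrite -Newton -scalerAr_ps scalerA.
rewrite TA TB -opprD -big_split /= scalerN scaler_sumr; congr (- _).
apply: eq_bigr => j Hj; rewrite scalerA -scalerDl; congr (_ *: _).
rewrite natrB //; ring.
Qed.
End Main.

Theorem mainTheorem6 (A : comAlgType rat) (z : nat -> A) (D : A -> A)
    (n k : nat) :
  is_derivation D ->
  (forall j, odd j -> (3 <= j)%N -> D (z j) = (j == k)%:R) ->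
  odd k -> (3 <= k)%N ->
  forall m : nat,
    psmap D (Helem z n) m =
    - \sum_(maxn 1 (k - n) <= i < k)
        ((k%:R^-1 * ('C(k, i))%:R : rat) *: psTpow i (Helem z (n + i - k)) m).
Proof.
move=> HD Hz Hk Hk3 m.
rewrite (@claim A z D k HD Hz Hk Hk3 n) pscN psc_sum; congr (- _).
under [RHS]eq_bigr do rewrite psTpowE.
rewrite big_nat_rev /= !big_geq_mkord.
apply: eq_big => i.
  have := ltn_ord i; rewrite /= => Hi.
  by apply/idP/idP; lia.
move=> /andP [H1 H2].
have -> : (1 + k - i.+1 = k - i)%N by lia.
have Hi := ltn_ord i; rewrite pscZ /cc bin_sub; last by lia.
rewrite subKn; last by lia.
by rewrite (_ : (n - (k - i) = n + i - k)%N) //; lia.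
Qed.
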